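(* Let $R$ be a finite commutative principal ideal ring with unity. Suppose that $R$ has exactly two associated prime ideals $p_1,p_2$ (i.e. $\lvert \operatorname{Ass}(R)\rvert=2$) and that $p_1\cap p_2=\{0\}$. Then the complement $\overline{\Gamma(R)}$ of the zero divisor graph of $R$ is a divisor graph.
   Context: $\operatorname{Ass}(R)$ is the set of associated primes of $R$ as an $R$-module, i.e. prime ideals of $R$ of the form $\operatorname{ann}(x)$ for some nonzero $x\in R$. The zero divisor graph $\Gamma(R)$ has vertex set the nonzero zero divisors of $R$, distinct $a,b$ adjacent iff $ab=0$; its complement $\overline{\Gamma(R)}$ has the same vertex set with distinct $a,b$ adjacent iff $ab\neq 0$. For a nonempty set $T$ of positive integers, the divisor graph $G(T)$ has vertex set $T$, with distinct $i,j$ adjacent iff $i\mid j$ or $j\mid i$; a graph is a divisor graph if it is isomorphic to some $G(T)$. *)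

(* Defs.v *)
From mathcomp Require Import all_boot all_order all_algebra.
Set Implicit Arguments.
Unset Strict Implicit.
Unset Printing Implicit Defensive.
Import GRing.Theory.
Local Open Scope ring_scope.

Definition is_ideal (R : finComNzRingType) (I : {set R}) : bool :=
  [&& (0 : R) \in I,
      [forall x, forall y, (x \in I) ==> (y \in I) ==> (x + y \in I)] &
      [forall r, forall x, (x \in I) ==> (r * x \in I)]].

Definition principal_ideal (R : finComNzRingType) (a : R) : {set R} :=
  [set r * a | r : R].

Definition is_PIR (R : finComNzRingType) : Prop :=
  forall I : {set R}, is_ideal I -> exists a : R, I = principal_ideal a.

Definition is_prime_ideal (R : finComNzRingType) (P : {set R}) : bool :=
  [&& is_ideal P, (1 : R) \notin P &
      [forall a, forall b, (a * b \in P) ==> (a \in P) || (b \in P)]].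

Definition ann (R : finComNzRingType) (x : R) : {set R} :=
  [set y : R | x * y == 0].

Definition Ass (R : finComNzRingType) : {set {set R}} :=
  [set P : {set R} | is_prime_ideal P && [exists x : R, (x != 0) && (P == ann x)]].

Definition zdiv_vertices (R : finComNzRingType) : {set R} :=
  [set a : R | (a != 0) && [exists b : R, (b != 0) && (a * b == 0)]].

(* Adjacency of the complement of the zero-divisor graph (on distinct vertices). *)
Definition compl_zdiv_adj (R : finComNzRingType) : rel R :=
  fun a b => a * b != 0.

(* A graph with vertex set V (nonempty, as in G(T) with T nonempty) and
   adjacency relation adj (considered on distinct vertices) is a divisor graph
   iff it is isomorphic to G(T) for some nonempty set T of positive integers,
   i.e. there is an injection f : V -> positive integers such that distinct
   u, v are adjacent iff f u | f v or f v | f u. *)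
Definition is_divisor_graph (T : finType) (V : {set T}) (adj : rel T) : Prop :=
  V != set0 /\
  exists f : T -> nat,
    {in V &, injective f} /\
    {in V, forall v, (0 < f v)%N} /\
    {in V &, forall u v, u != v -> adj u v = (f u %| f v)%N || (f v %| f u)%N}.

(* Main.v *)
Require Import Defs.
From mathcomp Require Import all_boot all_order all_algebra.
Import GRing.Theory.
Set Implicit Arguments.
Unset Strict Implicit.
Local Open Scope ring_scope.

Section Aux.
Variable R : finComNzRingType.

Lemma in_ann (x y : R) : (y \in ann x) = (x * y == 0).
Proof. by rewrite inE. Qed.

Lemma ann_max (b : R) : b != 0 ->
  exists c : R, [/\ c != 0, (exists r, c = r * b), ann b \subset ann c & ann c \in Ass R].
Proof.
move=> b0.
pose S := fun c : R => (c != 0) && [exists r, c == r * b].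
have Sb : S b by rewrite /S b0; apply/existsP; exists 1; rewrite mul1r.
case: (@arg_maxnP R b S (fun c => #|ann c|) Sb) => c /andP[c0 /existsP[r /eqP cE]] cmax.
have sub : ann b \subset ann c.
  by apply/subsetP=> y; rewrite !in_ann cE -mulrA => /eqP->; rewrite mulr0.
exists c; split => //; first by exists r.
rewrite inE; apply/andP; split; last by apply/existsP; exists c; rewrite c0 eqxx.
apply/and3P; split.
- apply/and3P; split.
  + by rewrite in_ann mulr0.
  + apply/forallP=> x; apply/forallP=> y; rewrite !in_ann.
    by apply/implyP=> /eqP hx; apply/implyP=> /eqP hy; rewrite mulrDr hx hy addr0.
  + apply/forallP=> s; apply/forallP=> x; rewrite !in_ann.
    by apply/implyP=> /eqP hx; rewrite mulrCA hx mulr0.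
- by rewrite in_ann mulr1.
- apply/forallP=> x; apply/forallP=> y; apply/implyP; rewrite !in_ann => /eqP hxy.
  case hx: (c * x == 0) => //=.
  have Scx : S (c * x).
    rewrite /S hx /=.
    by apply/existsP; exists (x * r); rewrite cE mulrC mulrA [x * r]mulrC.
  have sub2 : ann c \subset ann (c * x).
    by apply/subsetP=> z; rewrite !in_ann -mulrA mulrCA => /eqP->; rewrite mulr0.
  have := cmax _ Scx => le.
  have /eqP E : ann c == ann (c * x) by rewrite eqEcard sub2 /=; exact: le.
  by rewrite -in_ann E in_ann -mulrA hxy.
Qed.

Lemma Ass_ideal (P : {set R}) : P \in Ass R -> is_ideal P.
Proof. by rewrite inE => /andP[/and3P[]]. Qed.

Lemma Ass_ann (P : {set R}) : P \in Ass R -> exists2 x, x != 0 & P = ann x.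
Proof. by rewrite inE => /andP[_ /existsP[x /andP[x0 /eqP->]]]; exists x. Qed.

Lemma ideal0 (P : {set R}) : is_ideal P -> 0 \in P.
Proof. by case/and3P. Qed.

Lemma idealM (P : {set R}) r x : is_ideal P -> x \in P -> r * x \in P.
Proof. by case/and3P=> _ _ /forallP/(_ r)/forallP/(_ x)/implyP; apply. Qed.

Lemma Ass_prime (P : {set R}) a b : P \in Ass R -> a * b \in P -> (a \in P) || (b \in P).
Proof.
rewrite inE => /andP[/and3P[_ _ /forallP/(_ a)/forallP/(_ b)/implyP H] _]; exact: H.
Qed.

Lemma Ass_nonzero (P Q : {set R}) : P \in Ass R -> Q \in Ass R -> P != Q ->
  exists2 a, a \in P & a != 0.
Proof.
move=> PA QA PQ.
have gen : forall P' : {set R}, P' \in Ass R -> (forall a, a \in P' -> a = 0) ->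
    forall Q', Q' \in Ass R -> Q' = [set 0].
  move=> P' P'A h Q' Q'A; case: (Ass_ann Q'A) => x x0 Q'E.
  have P'0 : P' = [set 0].
    apply/setP=> y; rewrite inE; apply/idP/eqP; first exact: h.
    by move->; exact: ideal0 (Ass_ideal P'A).
  apply/setP=> y; rewrite Q'E in_ann inE; apply/idP/idP.
    move=> /eqP hxy; have : x * y \in P' by rewrite hxy ideal0 // Ass_ideal.
    move=> /(Ass_prime P'A) /orP [] /h; first by move=> x00; rewrite x00 eqxx in x0.
    by move->.
  by move/eqP->; rewrite mulr0.
case: (boolP [exists a, (a \in P) && (a != 0)]).
  by case/existsP=> a /andP[]; exists a.
move=> /existsPn H.
have h : forall a, a \in P -> a = 0.
  by move=> a aP; have := H a; rewrite aP /= negbK => /eqP.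
by rewrite (gen P PA h P PA) (gen P PA h Q QA) eqxx in PQ.
Qed.

Lemma Ass_cross (P Q : {set R}) a b : P \in Ass R -> Q \in Ass R ->
  P :&: Q = [set 0] -> a \in P -> b \in Q -> a * b = 0.
Proof.
move=> PA QA I aP bQ.
have : a * b \in P :&: Q.
  rewrite inE; apply/andP; split; last by apply: idealM => //; exact: Ass_ideal.
  by rewrite mulrC; apply: idealM => //; exact: Ass_ideal.
by rewrite I inE => /eqP.
Qed.

Lemma Ass_same (P Q : {set R}) a c : P \in Ass R -> Q \in Ass R -> P != Q ->
  Ass R = [set P; Q] -> P :&: Q = [set 0] ->
  a \in P -> c \in P -> a != 0 -> c != 0 -> a * c != 0.
Proof.
move=> PA QA PQ AE I aP cP a0 c0; apply/negP=> /eqP ac.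
case: (ann_max c0) => c' [c'0 [r c'E] sub c'A].
have c'P : c' \in P by rewrite c'E idealM ?Ass_ideal.
have aann : a \in ann c' by apply: (subsetP sub); rewrite in_ann mulrC ac.
move: c'A; rewrite AE !inE => /orP[] /eqP E.
- have QP : Q != P by rewrite eq_sym.
  case: (Ass_nonzero QA PA QP) => q qQ q0.
  have : q \in P :&: Q.
    by rewrite inE qQ andbT -E in_ann (Ass_cross PA QA I c'P qQ).
  by rewrite I inE (negbTE q0).
- have : a \in P :&: Q by rewrite inE aP -E.
  by rewrite I inE (negbTE a0).
Qed.

End Aux.

Theorem theorem2p8 (R : finComNzRingType) :
  is_PIR R ->
  #|Ass R| = 2%N ->
  (forall p1 p2 : {set R}, p1 \in Ass R -> p2 \in Ass R -> p1 != p2 ->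
     p1 :&: p2 = [set 0]) ->
  is_divisor_graph (zdiv_vertices R) (@compl_zdiv_adj R).
Proof.
move=> _ /eqP/cards2P [P1 [P2 [P12 AE]]] HI.
have P1A : P1 \in Ass R by rewrite AE !inE eqxx.
have P2A : P2 \in Ass R by rewrite AE !inE eqxx orbT.
have I12 := HI _ _ P1A P2A P12.
have P21 : P2 != P1 by rewrite eq_sym.
have I21 := HI _ _ P2A P1A P21.
have AE' : Ass R = [set P2; P1] by rewrite AE setUC.
have Vsub : forall v, v \in zdiv_vertices R -> (v \in P1) || (v \in P2).
  move=> v; rewrite inE => /andP[v0 /existsP[b /andP[b0 /eqP vb]]].
  case: (ann_max b0) => c [_ _ sub cA].
  have : v \in ann c by apply: (subsetP sub); rewrite in_ann mulrC vb.
  by move: cA; rewrite AE in_set2 => /orP[] /eqP ->->; rewrite ?orbT.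
split.
  case: (Ass_nonzero P1A P2A P12) => a aP a0.
  case: (Ass_ann P1A) => x x0 P1E.
  apply/set0Pn; exists a; rewrite inE a0 /=; apply/existsP; exists x.
  by rewrite x0 mulrC -in_ann -P1E.
pose f := fun v : R => if v \in P1 then (2 ^ (enum_rank v).+1)%N else (3 ^ (enum_rank v).+1)%N.
have n23 : forall i j, ~~ (2 ^ i.+1 %| 3 ^ j.+1)%N.
  move=> i j; apply/negP=> H.
  have : (2 %| 3 ^ j.+1)%N by apply: dvdn_trans H; rewrite dvdn_exp.
  by rewrite Euclid_dvdX.
have n32 : forall i j, ~~ (3 ^ i.+1 %| 2 ^ j.+1)%N.
  move=> i j; apply/negP=> H.
  have : (3 %| 2 ^ j.+1)%N by apply: dvdn_trans H; rewrite dvdn_exp.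
  by rewrite Euclid_dvdX.
exists f; split; [|split].
- move=> u v uV vV; rewrite /f.
  have ne : forall i j, (2 ^ i.+1)%N <> (3 ^ j.+1)%N.
    by move=> i j E; have := n23 i j; rewrite E dvdnn.
  case: (u \in P1); case: (v \in P1) => E.
  + by apply: enum_rank_inj; apply: val_inj; have := expnI (isT : (1 < 2)%N) E => [[]].
  + by case: (ne _ _ E).
  + by case: (ne _ _ (esym E)).
  + by apply: enum_rank_inj; apply: val_inj; have := expnI (isT : (1 < 3)%N) E => [[]].
- by move=> v _; rewrite /f; case: (v \in P1); rewrite expn_gt0.
- move=> u v uV vV uv; rewrite /compl_zdiv_adj /f.
  have u0 : u != 0 by move: uV; rewrite inE => /andP[].
  have v0 : v != 0 by move: vV; rewrite inE => /andP[].
  case uP: (u \in P1); case vP: (v \in P1).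
  + rewrite (Ass_same P1A P2A P12 AE I12 uP vP u0 v0) !dvdn_Pexp2l //.
    by rewrite !ltnS leq_total.
  + have vP2 : v \in P2 by have := Vsub v vV; rewrite vP.
    by rewrite (Ass_cross P1A P2A I12 uP vP2) eqxx (negbTE (n23 _ _)) (negbTE (n32 _ _)).
  + have uP2 : u \in P2 by have := Vsub u uV; rewrite uP.
    by rewrite (Ass_cross P2A P1A I21 uP2 vP) eqxx (negbTE (n23 _ _)) (negbTE (n32 _ _)).
  + have uP2 : u \in P2 by have := Vsub u uV; rewrite uP.
    have vP2 : v \in P2 by have := Vsub v vV; rewrite vP.
    rewrite (Ass_same P2A P1A P21 AE' I21 uP2 vP2 u0 v0) !dvdn_Pexp2l //.
    by rewrite !ltnS leq_total.
Qed.
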